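(* Let $G$ be a beetle-free graph and let $C$ be a clean shortest even hole of $G$. Then $N_G(C)\subseteq N_G^{1,1}(C)\cup N_G^{1}(C)\cup N_G^{2}(C)\cup N_G^{3}(C)$.
   Context: All graphs are finite, simple and undirected. A hole is an induced simple cycle with at least four nodes; it is even if it has an even number of nodes. A shortest even hole of $G$ is an even hole of $G$ with the minimum number of nodes among all even holes of $G$. For a subgraph $C$ of $G$, $N_G(C)$ is the set of nodes of $V(G)\setminus V(C)$ adjacent to some node of $C$. For a hole $C$ of $G$ and a node $x\notin V(C)$, let $N_C(x)=N_G(x)\cap V(C)$. The node $x$ is a major node of $C$ if $N_C(x)$ contains three distinct pairwise non-adjacent nodes; $M_G(C)$ is the set of major nodes of $C$. For $x\in N_G(C)\setminus M_G(C)$: $x\in N_G^i(C)$ ($1\le i\le 4$) if $|N_C(x)|=i$ and $C[N_C(x)]$ is connected; $x\in N_G^{i,j}(C)$ ($1\le i\le j\le 2$) if $C[N_C(x)]$ has exactly two connected components, with $i$ and $j$ nodes respectively. The hole $C$ is clean if $M_G(C)=N_G^{2,2}(C)=\varnothing$. A diamond is a $4$-cycle $b_1b_2b_3b_4b_1$ with exactly one chord $b_2b_4$. An induced subgraph $B$ of $G$ is a beetle of $G$ if $B$ is exactly the union of (1) a diamond on nodes $b_1,b_2,b_3,b_4$ (cycle $b_1b_2b_3b_4b_1$, chord $b_2b_4$) and (2) a tree $I$ of $G\setminus\{b_4\}$ having exactly three leaves $b_1,b_2,b_3$, such that $I\setminus\{b_1,b_2,b_3\}$ is an induced tree of $G$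 not adjacent to $b_4$. $G$ is beetle-free if it has no beetle. *)

(* Defs.v *)
(* A finite simple graph is a symmetric irreflexive
   relation e : rel T on a finType T. *)
From mathcomp Require Import all_boot.
Set Implicit Arguments. Unset Strict Implicit. Unset Printing Implicit Defensive.

Section Graphs.
Variable T : finType.

Definition restr (r : rel T) (S : {set T}) : rel T :=
  [rel u v | [&& r u v, u \in S & v \in S]].

Definition connected_on (r : rel T) (S : {set T}) : Prop :=
  forall u v, u \in S -> v \in S -> connect (restr r S) u v.

Definition del_edge (r : rel T) (u v : T) : rel T :=
  [rel a b | r a b && ~~ (((a == u) && (b == v)) || ((a == v) && (b == u)))].

(* (S, F) is a tree: F is a symmetric edge relation with all endpoints in S,
   (S,F) is connected and acyclic (every edge is a bridge). *)
Definition is_tree (S : {set T}) (F : rel T) : Prop :=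
  symmetric F /\ (forall u v, F u v -> u \in S /\ v \in S) /\
  connected_on F S /\
  (forall u v, F u v -> ~ connect (restr (del_edge F u v) S) u v).

Definition leaves (S : {set T}) (F : rel T) : {set T} :=
  [set v in S | #|[set w | F v w]| == 1].

Variable e : rel T.

(* c = [:: v_0; ...; v_{k-1}] is a hole: an induced simple cycle, k >= 4 *)
Definition hole (c : seq T) : Prop :=
  uniq c /\ 4 <= size c /\
  forall i j : 'I_(size c),
    e (tnth (in_tuple c) i) (tnth (in_tuple c) j) =
    ((i.+1 %% size c == j) || (j.+1 %% size c == i)).

Definition even_hole (c : seq T) : Prop := hole c /\ ~~ odd (size c).

Definition shortest_even_hole (c : seq T) : Prop :=
  even_hole c /\ forall c', even_hole c' -> size c <= size c'.

Definition VC (c : seq T) : {set T} := [set x in c].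

Definition NG (c : seq T) : {set T} :=
  [set x | (x \notin c) && [exists y in VC c, e x y]].

Definition NC (c : seq T) (x : T) : {set T} := [set y in VC c | e x y].

Definition major (c : seq T) (x : T) : Prop :=
  x \notin c /\
  exists a b d, [/\ a \in NC c x, b \in NC c x & d \in NC c x] /\
    [/\ a != b, a != d & b != d] /\
    [/\ ~~ e a b, ~~ e a d & ~~ e b d].

Definition Ni (c : seq T) (i : nat) (x : T) : Prop :=
  x \in NG c /\ ~ major c x /\ #|NC c x| = i /\ connected_on e (NC c x).

(* x in N^{i,j}_G(C): C[N_C(x)] has exactly two components, of sizes i, j *)
Definition Nij (c : seq T) (i j : nat) (x : T) : Prop :=
  x \in NG c /\ ~ major c x /\
  exists A B : {set T},
    [/\ A :|: B = NC c x, [disjoint A & B], #|A| = i & #|B| = j] /\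
    connected_on e A /\ connected_on e B /\
    (forall a b, a \in A -> b \in B -> ~~ e a b).

Definition clean (c : seq T) : Prop :=
  (forall x, ~ major c x) /\ (forall x, ~ Nij c 2 2 x).

Definition diamond_edge (b1 b2 b3 b4 : T) (u v : T) : bool :=
  let E a b := ((u == a) && (v == b)) || ((u == b) && (v == a)) in
  [|| E b1 b2, E b2 b3, E b3 b4, E b4 b1 | E b2 b4].

(* G contains a beetle: a diamond on b1..b4 and a tree I = (S,F) of G \ b4
   with leaves exactly b1,b2,b3, such that I \ {b1,b2,b3} is an induced tree
   of G not adjacent to b4, and the induced subgraph on V(diamond) u V(I)
   has exactly the diamond edges and the tree edges. *)
Definition has_beetle : Prop :=
  exists (b1 b2 b3 b4 : T) (S : {set T}) (F : rel T),
    uniq [:: b1; b2; b3; b4] /\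
    [/\ e b1 b2, e b2 b3, e b3 b4, e b4 b1 & e b2 b4] /\ ~~ e b1 b3 /\
    b4 \notin S /\
    (forall u v, F u v -> e u v) /\
    is_tree S F /\
    leaves S F = [set b1; b2; b3] /\
    (let S' := S :\: [set b1; b2; b3] in
       (forall u v, u \in S' -> v \in S' -> F u v = e u v) /\
       is_tree S' (restr e S') /\
       (forall u, u \in S' -> ~~ e u b4)) /\
    (let W := S :|: [set b1; b2; b3; b4] in
       forall u v, u \in W -> v \in W ->
         e u v = diamond_edge b1 b2 b3 b4 u v || F u v).

Definition beetle_free : Prop := ~ has_beetle.

End Graphs.

(* Main.v *)
Require Import Defs.
From mathcomp Require Import all_boot zify.
Set Implicit Arguments. Unset Strict Implicit. Unset Printing Implicit Defensive.

Section Work.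
Variables (T : finType) (e : rel T).
Hypotheses (e_sym : symmetric e) (e_irr : irreflexive e).

Definition cadj (n i j : nat) : bool :=
  [|| i.+1 == j, j.+1 == i, (i.+1 == n) && (j == 0) | (j.+1 == n) && (i == 0)].

Lemma cadjE n i j : i < n -> j < n ->
  ((i.+1 %% n == j) || (j.+1 %% n == i)) = cadj n i j.
Proof.
move=> hi hj; rewrite /cadj.
have H : forall a b, a < n -> b < n -> (a.+1 %% n == b) = (a.+1 == b) || (a.+1 == n) && (b == 0).
  move=> a b ha hb; case: (ltngtP a.+1 n) => h.
  - rewrite modn_small //; apply/idP/idP; lia.
  - lia.
  - rewrite h modnn; apply/idP/idP; lia.
rewrite !H //; apply/idP/idP; lia.
Qed.

Lemma holeP (c : seq T) x0 : hole e c ->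
  forall i j, i < size c -> j < size c ->
  e (nth x0 c i) (nth x0 c j) = cadj (size c) i j.
Proof.
case=> _ [_ H] i j hi hj.
have := H (Ordinal hi) (Ordinal hj); rewrite !(tnth_nth x0) /= => ->.
by rewrite cadjE.
Qed.

Lemma holeI (c : seq T) x0 : uniq c -> 4 <= size c ->
  (forall i j, i < size c -> j < size c ->
     e (nth x0 c i) (nth x0 c j) = cadj (size c) i j) -> hole e c.
Proof.
move=> u s H; split=> //; split=> // i j.
by rewrite !(tnth_nth x0) /= H // cadjE.
Qed.

Definition idxr (n k i : nat) := if k + i < n then k + i else k + i - n.

Lemma nth_rot (c : seq T) x0 k i : k <= size c -> i < size c ->
  nth x0 (rot k c) i = nth x0 c (idxr (size c) k i).
Proof.
move=> hk hi; rewrite /rot nth_cat size_drop /idxr.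
case: ifP => h.
  by rewrite nth_drop ifT //; lia.
rewrite nth_take; last by lia.
by rewrite ifF; [congr nth; lia | lia].
Qed.

Lemma hole_rot (c : seq T) k : k <= size c -> hole e c -> hole e (rot k c).
Proof.
move=> hk hc; have [u [s _]] := hc.
case: c hk hc u s => [|x0 c'] hk hc u s; first by [].
set c := x0 :: c' in hk hc u s *.
apply: (@holeI _ x0); rewrite ?rot_uniq ?size_rot //.
move=> i j hi hj; rewrite !nth_rot // holeP //; last 2 first.
  rewrite /idxr; case: ifP; lia.
  rewrite /idxr; case: ifP; lia.
rewrite /cadj /idxr; case: ifP => h1; case: ifP => h2; apply/idP/idP; lia.
Qed.


Lemma seg_hole (c : seq T) x m : hole e c -> x \notin c -> 3 <= m < size c ->
  e x (nth x c 0) -> e x (nth x c m.-1) ->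
  (forall i, 0 < i < m.-1 -> ~~ e x (nth x c i)) -> hole e (x :: take m c).
Proof.
move=> hc xc hm h0 h1 hint; have [u [s _]] := hc.
have hx : forall j, j < m -> e x (nth x c j) = (j == 0) || (j == m.-1).
  move=> j hj; case: (boolP ((j == 0) || (j == m.-1))) => hj'.
    by case/orP: hj' => /eqP ->.
  by apply/negbTE/hint; lia.
have sz : size (take m c) = m by rewrite size_take ifT //; lia.
apply: (@holeI _ x).
- by rewrite /= take_uniq ?andbT //; apply: contra xc; apply: mem_take.
- by rewrite /= sz; lia.
rewrite /= sz => i j hi hj.
case: i hi => [|i] hi; case: j hj => [|j] hj /=.
- by rewrite e_irr /cadj; apply/esym/idP; lia.
- rewrite nth_take; last by lia.
  rewrite hx; last by lia.
  by rewrite /cadj; apply/idP/idP; lia.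
- rewrite nth_take; last by lia.
  rewrite e_sym hx; last by lia.
  by rewrite /cadj; apply/idP/idP; lia.
- rewrite !nth_take; try lia.
  rewrite holeP //; try lia.
  by rewrite /cadj; apply/idP/idP; lia.
Qed.


Lemma NC_eq (c c' : seq T) y : c =i c' -> NC e c y = NC e c' y.
Proof. by move=> H; apply/setP=> z; rewrite !inE H. Qed.

Lemma NG_eq (c c' : seq T) : c =i c' -> NG e c = NG e c'.
Proof.
move=> H; apply/setP=> z; rewrite !inE H.
have -> : VC c = VC c' by apply/setP=> w; rewrite !inE H.
by [].
Qed.

Lemma major_eq (c c' : seq T) y : c =i c' -> major e c y <-> major e c' y.
Proof. by move=> H; rewrite /major (NC_eq y H) H. Qed.

Lemma Ni_eq (c c' : seq T) i y : c =i c' -> Ni e c i y <-> Ni e c' i y.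
Proof.
move=> H; rewrite /Ni (NG_eq H) (NC_eq y H).
split=> [[a [b r]]|[a [b r]]]; split=> //; split=> //; move: b; rewrite (major_eq y H) //.
Qed.

Lemma Nij_eq (c c' : seq T) i j y : c =i c' -> Nij e c i j y <-> Nij e c' i j y.
Proof.
move=> H; rewrite /Nij (NG_eq H) (NC_eq y H).
split=> [[a [b r]]|[a [b r]]]; split=> //; split=> //; move: b; rewrite (major_eq y H) //.
Qed.

Lemma clean_eq (c c' : seq T) : c =i c' -> clean e c -> clean e c'.
Proof.
move=> H [h1 h2]; split=> y; first by rewrite -(major_eq y H).
by rewrite -(Nij_eq _ _ y H).
Qed.

Lemma eqcc (c : seq T) x i j : uniq c -> i < size c -> j < size c ->
  (nth x c i == nth x c j) = (i == j).
Proof. by move=> u hi hj; rewrite nth_uniq. Qed.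

Lemma eqcx (c : seq T) x i : x \notin c -> i < size c -> (nth x c i == x) = false.
Proof. by move=> xc hi; apply/eqP=> h; move: xc; rewrite -h mem_nth. Qed.

Lemma eqxc (c : seq T) x i : x \notin c -> i < size c -> (x == nth x c i) = false.
Proof. by move=> xc hi; rewrite eq_sym eqcx. Qed.

Lemma majorI (c : seq T) x i j k : hole e c -> x \notin c ->
  i < size c -> j < size c -> k < size c ->
  e x (nth x c i) -> e x (nth x c j) -> e x (nth x c k) ->
  [&& i != j, i != k & j != k] ->
  [&& ~~ cadj (size c) i j, ~~ cadj (size c) i k & ~~ cadj (size c) j k] ->
  major e c x.
Proof.
move=> hc xc hi hj hk ei ej ek /and3P [d1 d2 d3] /and3P [a1 a2 a3].
have [u _] := hc.
split=> //; exists (nth x c i), (nth x c j), (nth x c k).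
split; first by split; rewrite !inE mem_nth.
split; first by split; rewrite eqcc.
by split; rewrite holeP.
Qed.

Lemma NC_char (c : seq T) x s : uniq c ->
  (forall i, i \in s -> i < size c) ->
  (forall i, i < size c -> e x (nth x c i) = (i \in s)) ->
  NC e c x = [set y in map (nth x c) s].
Proof.
move=> u hs H; apply/setP=> y; rewrite !inE.
case: (boolP (y \in c)) => yc /=.
  have hy := index_mem y c; rewrite yc in hy.
  rewrite -{1}(nth_index x yc) H //.
  apply/idP/mapP => [hi|[i hi ->]]; first by exists (index y c); rewrite ?nth_index.
  by rewrite index_uniq // hs.
apply/esym/negbTE; apply: contra yc => /mapP [i hi ->].
by rewrite mem_nth // hs.
Qed.

Lemma card_map_nth (c : seq T) x s : uniq c -> uniq s ->
  (forall i, i \in s -> i < size c) ->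
  #|[set y in map (nth x c) s]| = size s.
Proof.
move=> u us hs; rewrite cardsE.
have U : uniq (map (nth x c) s).
  rewrite map_inj_in_uniq // => i j hi hj /eqP; rewrite eqcc ?hs //.
  by move/eqP.
by move/card_uniqP: U => ->; rewrite size_map.
Qed.

Lemma restr_sym (r : rel T) (S : {set T}) : symmetric r -> symmetric (restr r S).
Proof. by move=> h u v; rewrite /restr /= h; case: (u \in S); case: (v \in S); rewrite ?andbF ?andbT. Qed.

Lemma conn_path (r : rel T) (f : nat -> T) a b : a <= b ->
  (forall i, a <= i < b -> r (f i) (f i.+1)) -> connect r (f a) (f b).
Proof.
elim: b => [|b IH] hab H.
  by have -> : a = 0 by lia.
case: (ltngtP a b.+1) => h; try lia.
  apply: connect_trans (IH _ _) _; try lia.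
    by move=> i hi; apply: H; lia.
  by apply: connect1; apply: H; lia.
by rewrite h.
Qed.

Lemma conn_root (r : rel T) (S : {set T}) z : symmetric r ->
  (forall u, u \in S -> connect (restr r S) z u) -> connected_on r S.
Proof.
move=> hs H u v hu hv.
apply: connect_trans (H v hv).
by rewrite (sym_connect_sym (restr_sym S hs)); apply: H.
Qed.

Lemma seg_conn (c : seq T) x a m : a + m <= size c -> hole e c ->
  connected_on e [set y in map (nth x c) (iota a m)].
Proof.
move=> ham hc; apply: (@conn_root _ _ (nth x c a)) => // u.
rewrite inE => /mapP [i]; rewrite mem_iota => hi ->.
apply: (@conn_path _ (nth x c)); first by lia.
move=> j hj; rewrite /restr /= !inE holeP //; try lia.
apply/and3P; split.
- by rewrite /cadj; apply/idP; lia.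
- by apply/mapP; exists j; rewrite ?mem_iota //; lia.
- by apply/mapP; exists j.+1; rewrite ?mem_iota //; lia.
Qed.


Lemma Ni_seg (c : seq T) x m : hole e c -> x \in NG e c -> ~ major e c x ->
  m <= size c ->
  (forall i, i < size c -> e x (nth x c i) = (i < m)) -> Ni e c m x.
Proof.
move=> hc hx hm hms H; have [u _] := hc.
have hNC : NC e c x = [set y in map (nth x c) (iota 0 m)].
  apply: NC_char => // i; rewrite ?mem_iota; first lia.
  by move=> hi; rewrite H.
split=> //; split=> //; rewrite hNC; split.
  by rewrite card_map_nth ?size_iota ?iota_uniq // => i; rewrite mem_iota; lia.
by apply: seg_conn.
Qed.

Lemma Nij_seg (c : seq T) x a s b t : hole e c -> x \in NG e c -> ~ major e c x ->
  a + s < b -> b + t < size c ->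
  (forall i, i < size c -> e x (nth x c i) = (a <= i < a + s) || (b <= i < b + t)) ->
  Nij e c s t x.
Proof.
move=> hc hx hm hab hbt H; have [u _] := hc.
have hNC : NC e c x = [set y in map (nth x c) (iota a s ++ iota b t)].
  apply: NC_char => // i; rewrite ?mem_cat ?mem_iota; first lia.
  by move=> hi; rewrite H.
split=> //; split=> //.
exists [set y in map (nth x c) (iota a s)], [set y in map (nth x c) (iota b t)].
split.
- split.
  + by rewrite hNC; apply/setP=> y; rewrite !inE map_cat mem_cat.
  + apply/pred0P => y /=; apply/negbTE/negP => /andP [].
    rewrite !inE => /mapP [i hi ->] /mapP [j hj].
    move: hi hj; rewrite !mem_iota => hi hj /eqP; rewrite eqcc //; try lia.
  + by rewrite card_map_nth ?size_iota ?iota_uniq // => i; rewrite mem_iota; lia.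
  + by rewrite card_map_nth ?size_iota ?iota_uniq // => i; rewrite mem_iota; lia.
split; first by apply: seg_conn => //; lia.
split; first by apply: seg_conn => //; lia.
move=> y z; rewrite !inE => /mapP [i hi ->] /mapP [j hj ->].
move: hi hj; rewrite !mem_iota => hi hj.
rewrite holeP //; try lia.
by rewrite /cadj; apply/negP; lia.
Qed.

End Work.


Section Beetle.
Variables (T : finType) (e : rel T).
Hypotheses (e_sym : symmetric e) (e_irr : irreflexive e).

Lemma bridge (r : rel T) (S : {set T}) u v (L : pred T) :
  (forall a b, r a b -> ~~ (((a == u) && (b == v)) || ((a == v) && (b == u))) -> L a = L b) ->
  L u != L v -> ~ connect (restr (del_edge r u v) S) u v.
Proof.
move=> H huv C.
have cl : closed (restr (del_edge r u v) S) L.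
  by move=> a b /= /andP [/andP [rab hn] _]; apply: H.
have := closed_connect cl C; rewrite !unfold_in => h.
by move: huv; rewrite h eqxx.
Qed.

Lemma E_sym (a b u v : T) :
  ((u == a) && (v == b)) || ((u == b) && (v == a)) =
  ((v == a) && (u == b)) || ((v == b) && (u == a)).
Proof. by case: (u == a); case: (v == b); case: (u == b); case: (v == a). Qed.

Lemma diamond_sym (b1 b2 b3 b4 u v : T) :
  diamond_edge b1 b2 b3 b4 u v = diamond_edge b1 b2 b3 b4 v u.
Proof. by rewrite /diamond_edge /= !(E_sym _ _ u v). Qed.

Lemma beetle (c : seq T) x : hole e c -> x \notin c ->
  (forall i, i < size c -> e x (nth x c i) = (i <= 2) || (i == (size c).-1)) ->
  has_beetle e.
Proof.
move=> hc xc hx; have [u [n4 _]] := hc.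
set n := size c in n4 hx.
have En : n = size c by [].
have h0 : 0 < n by lia.
have h1 : 1 < n by lia.
have h2 : 2 < n by lia.
have hn : n.-1 < n by lia.
have dec : forall y, y \in c -> exists2 i, i < n & y = nth x c i.
  by move=> y yc; exists (index y c); rewrite ?index_mem ?nth_index.
pose S := x |: [set y in c | y != nth x c 0].
pose F : rel T := fun a b => [&& e a b, a \in S, b \in S &
            ~~ diamond_edge (nth x c 1) x (nth x c n.-1) (nth x c 0) a b].
have memSc : forall i, i < n -> (nth x c i \in S) = (i != 0).
  by move=> i hi; rewrite !inE eqcx // mem_nth // eqcc.
have memSx : x \in S by rewrite !inE eqxx.
have Fcc : forall i j, i < n -> j < n ->
    F (nth x c i) (nth x c j) = [&& cadj n i j, i != 0 & j != 0].
  move=> i j hi hj; rewrite /F /= holeP // !memSc // /diamond_edge /=.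
  rewrite !eqcc // ?eqcx //.
  rewrite /cadj; apply/idP/idP; lia.
have Fxc : forall j, j < n -> F x (nth x c j) = (j == 2).
  move=> j hj; rewrite /F /= hx // memSx memSc // /diamond_edge /=.
  rewrite !eqcc // ?eqcx // ?eqxc // eqxx.
  by apply/idP/idP; lia.
have Fsym : symmetric F.
  move=> a b; rewrite /F /= e_sym diamond_sym.
  by case: (a \in S); case: (b \in S); rewrite ?andbF ?andbT.
have Fcx : forall j, j < n -> F (nth x c j) x = (j == 2).
  by move=> j hj; rewrite -(Fxc j hj); apply: Fsym.
have Fxx : F x x = false by rewrite /F /= e_irr.
have dW : forall w, w = x \/ (exists2 k, k < n & w = nth x c k) \/ (w != x /\ w \notin c).
  move=> w; case: (w =P x) => [->|/eqP wx]; first by left.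
  case: (boolP (w \in c)) => wc; last by right; right.
  by right; left; apply: dec.
have nin : forall w k, w \notin c -> k < n -> (w == nth x c k) = false.
  by move=> w k wc hk; apply/negP => /eqP h; move: wc; rewrite h mem_nth.
have outS : forall w, w != x -> w \notin c -> w \notin S.
  by move=> w wx wc; rewrite !inE negb_or wx /= negb_and wc.
have FoutL : forall w v, w != x -> w \notin c -> F w v = false.
  by move=> w v wx wc; rewrite /F /= (negbTE (outS _ wx wc)) andbF.
have FoutR : forall w v, w != x -> w \notin c -> F v w = false.
  by move=> w v wx wc; rewrite /F /= (negbTE (outS _ wx wc)) !andbF.
have RF : forall a b, F a b -> restr F S a b.
  move=> a b h; change ([&& F a b, a \in S & b \in S]).
  by rewrite h; case/and4P: h => _ -> ->.
exists (nth x c 1), x, (nth x c n.-1), (nth x c 0), S, F.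
split.
  rewrite /= !inE !eqcc // ?eqcx // ?eqxc //.
  apply/idP; lia.
split.
  rewrite e_sym hx // (hx n.-1) // holeP // (holeP _ hc) // hx //.
  by split; rewrite /cadj; apply/idP; lia.
split.
  rewrite holeP //; rewrite /cadj; apply/negP; lia.
split; first by rewrite memSc.
split; first by move=> a b /and4P [].
split.
  split; first exact: Fsym.
  split; first by move=> a b /and4P [].
  split.
    apply: (@conn_root _ _ _ (nth x c 1)) => // w.
    have path1 : forall k, 1 <= k < n -> connect (restr F S) (nth x c 1) (nth x c k).
      move=> k hk; apply: (@conn_path _ _ (nth x c)); first lia.
      move=> l hl; apply: RF; rewrite Fcc; try lia.
      by rewrite /cadj; apply/idP; lia.
    case: (dW w) => [->|[[k hk ->]|[wx wc]]] hw.
    - apply: connect_trans (path1 2 _) _; first lia.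
      by apply: connect1; apply: RF; rewrite Fcx.
    - by apply: path1; move: hw; rewrite memSc //; lia.
    - by move: hw; rewrite (negbTE (outS _ wx wc)).
  move=> a b hab.
  case: (dW a) => [ea|[[i hi ea]|[ax ac]]]; last by rewrite FoutL in hab.
  - case: (dW b) => [eb|[[j hj eb]|[bx bc]]]; last by rewrite FoutR in hab.
    + by move: hab; rewrite ea eb Fxx.
    + subst a b; move: hab; rewrite Fxc // => /eqP j2; subst j.
      apply: (@bridge _ _ _ _ (fun w => w == x)); last by rewrite eqxx eqcx.
      move=> p q; case: (dW p) => [->|[[k hk ->]|[px pc]]];
        case: (dW q) => [->|[[l hl ->]|[qx qc]]] => hpq;
        try by [rewrite Fxx in hpq | rewrite FoutL in hpq | rewrite FoutR in hpq].
      * move: hpq; rewrite Fxc // => /eqP ->; by rewrite !eqxx ?orbT.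
      * move: hpq; rewrite Fcx // => /eqP ->; by rewrite !eqxx ?orbT.
      * by rewrite !eqcx.
  - case: (dW b) => [eb|[[j hj eb]|[bx bc]]]; last by rewrite FoutR in hab.
    + subst a b; move: hab; rewrite Fcx // => /eqP i2; subst i.
      apply: (@bridge _ _ _ _ (fun w => w == x)); last by rewrite eqxx eqcx.
      move=> p q; case: (dW p) => [->|[[k hk ->]|[px pc]]];
        case: (dW q) => [->|[[l hl ->]|[qx qc]]] => hpq;
        try by [rewrite Fxx in hpq | rewrite FoutL in hpq | rewrite FoutR in hpq].
      * move: hpq; rewrite Fxc // => /eqP ->; by rewrite !eqxx ?orbT.
      * move: hpq; rewrite Fcx // => /eqP ->; by rewrite !eqxx ?orbT.
      * by rewrite !eqcx.
    + subst a b; move: hab; rewrite Fcc // => hij.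
      pose m := minn i j.
      apply: (@bridge _ _ _ _ (fun w => (if w == x then 2 else index w c) <= m)); last first.
        rewrite !eqcx // !index_uniq //; rewrite /m; move: hij; rewrite /cadj.
        by move=> h; apply/negP; lia.
      move=> p q; case: (dW p) => [->|[[k hk ->]|[px pc]]];
        case: (dW q) => [->|[[l hl ->]|[qx qc]]] => hpq;
        try by [rewrite Fxx in hpq | rewrite FoutL in hpq | rewrite FoutR in hpq].
      * move: hpq; rewrite Fxc // => /eqP ->; by rewrite eqxx eqcx // index_uniq.
      * move: hpq; rewrite Fcx // => /eqP ->; by rewrite eqxx eqcx // index_uniq.
      * rewrite !eqcx // !index_uniq // !eqcc //; move: hpq hij.
        rewrite Fcc // /cadj /m => h1' h2' h3'; apply/idP/idP; lia.
have NB1 : forall v z, (forall w, F v w = (w == z)) -> #|[set w | F v w]| = 1.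
  move=> v z H; have -> : [set w | F v w] = [set z] by apply/setP=> w; rewrite !inE H.
  by rewrite cards1.
have NB2 : forall v a b, a != b -> F v a -> F v b -> 1 < #|[set w | F v w]|.
  move=> v a b ab ha hb; apply: leq_trans (subset_leq_card (_ : [set a; b] \subset _)).
    by rewrite cards2 ab.
  by apply/subsetP => w; rewrite !inE => /orP [] /eqP ->.
split.
  apply/setP => y.
  have -> : (y \in leaves S F) = (y \in S) && (#|[set w | F y w]| == 1) by rewrite /leaves inE.
  rewrite [y \in [set _; _; _]]inE [y \in [set _; _]]inE !in_set1.
  case: (dW y) => [->|[[k hk ->]|[yx yc]]].
  - rewrite eqxx memSx orbT /=; apply/eqP; apply: (NB1 _ (nth x c 2)) => w.
    case: (dW w) => [->|[[l hl ->]|[wx wc]]].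
    + by rewrite Fxx eqxc.
    + by rewrite Fxc // eqcc.
    + by rewrite FoutR // nin.
  - rewrite memSc // !eqcc // eqcx //=.
    case: (k =P 0) => [->|/eqP k0] /=; first by apply/esym/negbTE/eqP; lia.
    case: (boolP ((k == 1) || (k == n.-1))) => hk1.
    + rewrite orbF hk1; apply/eqP; apply: (NB1 _ (nth x c (if k == 1 then 2 else n.-2))) => w.
      case: (dW w) => [->|[[l hl ->]|[wx wc]]].
      * rewrite Fcx // eqxc //; last by case: ifP; lia.
        apply/idP; lia.
      * rewrite Fcc // eqcc //; last by case: ifP; lia.
        by rewrite /cadj; case: ifP => h; apply/idP/idP; lia.
      * by rewrite FoutR // nin //; case: ifP; lia.
    + rewrite orbF (negbTE hk1); apply/negbTE; rewrite neq_ltn; apply/orP; right.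
      apply: (NB2 _ (nth x c k.-1) (nth x c k.+1)).
      * by rewrite eqcc //; lia.
      * by rewrite Fcc //; try lia; rewrite /cadj; apply/idP; lia.
      * by rewrite Fcc //; try lia; rewrite /cadj; apply/idP; lia.
  - by rewrite (negbTE (outS _ yx yc)) /= !nin // (negbTE yx).
split.
  move=> S'.
  have memS'c : forall k, k < n -> (nth x c k \in S') = (1 < k < n.-1).
    move=> k hk; rewrite /S' in_setD memSc // !inE !eqcc // eqcx //.
    by apply/idP/idP; lia.
  have memS'x : (x \in S') = false by rewrite /S' in_setD !inE eqxx orbT.
  have dS' : forall y, y \in S' -> exists2 k, 1 < k < n.-1 & y = nth x c k.
    move=> y hy; case: (dW y) => [ey|[[k hk ey]|[yx yc]]].
    - by move: hy; rewrite ey memS'x.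
    - by exists k => //; move: hy; rewrite ey memS'c.
    - by move: hy; rewrite /S' in_setD (negbTE (outS _ yx yc)) andbF.
  split.
    move=> a b /dS' [k hk ->] /dS' [l hl ->].
    rewrite Fcc ?(holeP _ hc); try lia.
    by apply/idP/idP; rewrite /cadj; lia.
  split; last first.
    move=> a /dS' [k hk ->]; rewrite (holeP _ hc); try lia.
    by rewrite /cadj; apply/negP; lia.
  split; first exact: restr_sym.
  split; first by move=> a b /and3P [].
  split.
    apply: (@conn_root _ _ _ (nth x c 2)); first exact: restr_sym.
    move=> w /dS' [k hk ->].
    apply: (@conn_path _ _ (nth x c)); first lia.
    move=> l hl; rewrite /restr /= (holeP _ hc) ?memS'c; try lia.
    by rewrite /cadj; apply/idP; lia.
  move=> a b hab; have /and3P [_ /dS' [k hk ea] /dS' [l hl eb]] := hab.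
  have hkn : k < size c by lia.
  have hln : l < size c by lia.
  subst a b; rewrite /restr /= (holeP _ hc hkn hln) in hab.
  apply: (@bridge _ _ _ _ (fun w => index w c <= minn k l)); last first.
    rewrite !index_uniq //; move: hab; rewrite /cadj.
    by move=> h; apply/negP; lia.
  move=> p q /and3P [hpq hp hq]; move: hpq.
  case/dS': hp => k' hk' ->; case/dS': hq => l' hl' -> hpq.
  have hkn' : k' < size c by lia.
  have hln' : l' < size c by lia.
  rewrite !index_uniq // !eqcc //.
  rewrite (holeP _ hc hkn' hln') in hpq.
  move: hpq hab; rewrite /cadj => h1' /andP [h2' _] h3'.
  by apply/idP/idP; lia.
move=> W a b ha hb.
have dW' : forall y, y \in W -> y = x \/ exists2 k, k < n & y = nth x c k.
  move=> y hy; case: (dW y) => [ey|[[k hk ey]|[yx yc]]]; [by left|by right; exists k|].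
  move: hy; rewrite /W in_setU (negbTE (outS _ yx yc)) /= !inE !nin //.
  by rewrite (negbTE yx).
case: (dW' _ ha) => [->|[k hk ->]]; case: (dW' _ hb) => [->|[l hl ->]].
- by rewrite e_irr Fxx /diamond_edge /= !eqxc // ?andbF.
- rewrite hx // Fxc // /diamond_edge /= !eqxx !eqxc // !eqcc //.
  by apply/idP/idP; lia.
- rewrite e_sym hx // Fcx // /diamond_edge /= !eqxx !eqcx // !eqcc //.
  by apply/idP/idP; lia.
- rewrite holeP // Fcc // /diamond_edge /= !eqcx // !eqcc //.
  by rewrite /cadj; apply/idP/idP; lia.
Qed.

End Beetle.


Section Core.
Variables (T : finType) (e : rel T).
Hypotheses (e_sym : symmetric e) (e_irr : irreflexive e).

Lemma idxr_lt n k i : k < n -> i < n -> idxr n k i < n.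
Proof. by rewrite /idxr; case: ifP; lia. Qed.

Lemma segrot (c : seq T) x k m : hole e c -> x \notin c -> k < size c ->
  3 <= m < size c ->
  e x (nth x c (idxr (size c) k 0)) -> e x (nth x c (idxr (size c) k m.-1)) ->
  (forall i, 0 < i < m.-1 -> ~~ e x (nth x c (idxr (size c) k i))) ->
  hole e (x :: take m (rot k c)).
Proof.
move=> hc xc hk hm h0 h1 hi.
apply: seg_hole => //.
- by apply: hole_rot => //; lia.
- by rewrite mem_rot.
- by rewrite size_rot.
- by rewrite nth_rot //; lia.
- by rewrite nth_rot //; lia.
- by move=> i hi'; rewrite nth_rot; try lia; apply: hi.
Qed.

Lemma parA n p : ~~ odd n -> p <= n -> ~~ odd p.+2 \/ ~~ odd (n - p).+1.
Proof.
move=> hn hp; case: (boolP (odd p)) => h; [right|left]; rewrite /= ?negbK //.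
by rewrite oddB // (negbTE hn) h.
Qed.

Lemma parB n p : ~~ odd n -> p <= n -> ~~ odd p.+1 \/ ~~ odd (n - p).+2.
Proof.
move=> hn hp; case: (boolP (odd p)) => h; [left|right]; rewrite /= ?negbK //.
by rewrite oddB // (negbTE hn) (negbTE h).
Qed.

Lemma shortc (c h : seq T) : shortest_even_hole e c -> hole e h -> ~~ odd (size h) ->
  size h < size c -> False.
Proof. by move=> [_ H] hh ho hs; have := H h (conj hh ho); lia. Qed.


Ltac slia := repeat match goal with
  | H : is_true (e _ _) |- _ => clear H
  | H : is_true (~~ e _ _) |- _ => clear H
  | H : e _ _ = _ |- _ => clear H
  | H : is_true (_ \in _) |- _ => clear H
  | H : is_true (~~ (_ \in _)) |- _ => clear H
  | H : is_true (uniq _) |- _ => clear H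
  | H : is_true (~~ odd _) |- _ => clear H
  end; lia.

Lemma core (c : seq T) x : beetle_free e -> clean e c -> shortest_even_hole e c ->
  x \in NG e c -> e x (nth x c 0) -> ~~ e x (nth x c (size c).-1) ->
  Nij e c 1 1 x \/ Ni e c 1 x \/ Ni e c 2 x \/ Ni e c 3 x.
Proof.
move=> bf [nomaj no22] sh xNG hP0 hlast.
have [[hc ev] _] := sh.
have [u [n4 _]] := hc.
have xc : x \notin c by move: xNG; rewrite inE => /andP [].
set n := size c in n4 hlast ev.
have En : n = size c by [].
have nm := nomaj x.
have Maj : forall i j k, i < n -> j < n -> k < n ->
    e x (nth x c i) -> e x (nth x c j) -> e x (nth x c k) ->
    [&& i != j, i != k & j != k] ->
    [&& ~~ cadj n i j, ~~ cadj n i k & ~~ cadj n j k] -> False.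
  by move=> i j k hi hj hk a b d f g; apply: nm; apply: (majorI hc xc hi hj hk).
case: (boolP [exists q : 'I_n, (1 < q < n.-1) && e x (nth x c q)]) => hex; last first.
  have nq : forall q, 1 < q < n.-1 -> ~~ e x (nth x c q).
    move=> q hq; have hqn : q < n by slia.
    by move/existsPn: hex => /(_ (Ordinal hqn)) /=; rewrite hq.
  case h1: (e x (nth x c 1)).
  - right; right; left; apply: Ni_seg => //; first slia.
    move=> i hi; case: (ltnP i 2) => h2.
      by case: i h2 {hi} => [|[|]] //.
    case: (i =P n.-1) => [->|ne]; first by rewrite (negbTE hlast).
    by apply/negbTE/nq; slia.
  - right; left; apply: Ni_seg => //; first slia.
    move=> i hi; case: (ltnP i 1) => h2.
      by case: i h2 {hi} => [|].
    case: (i =P n.-1) => [->|ne]; first by rewrite (negbTE hlast).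
    case: (i =P 1) => [->|ne1]; first by rewrite h1.
    by apply/negbTE/nq; slia.
have hex' : exists q, (1 < q < n.-1) && e x (nth x c q).
  by move/existsP: hex => [q hq]; exists q.
case: (ex_minnP hex') => p /andP [hp hPp] hmin; clear hex hex'.
have hlow : forall i, 1 < i < p -> ~~ e x (nth x c i).
  move=> i hi; apply/negP => hPi.
  have : p <= i by apply: hmin; rewrite hPi andbT; slia.
  slia.
have hfar : forall r, p.+2 <= r < n.-1 -> ~~ e x (nth x c r).
  move=> r hr; apply/negP => hPr.
  apply: (Maj 0 p r) => //; try slia.
  by rewrite /cadj; apply/and3P; split; apply/negP; slia.
have Psub : forall i, i < n -> e x (nth x c i) ->
    [|| i == 0, (i == 1) && e x (nth x c 1), i == p | (i == p.+1) && e x (nth x c p.+1)].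
  move=> i hi hPi.
  case: (i =P 0) => [->|n0] //.
  case: (i =P 1) => [e1|n1]; first by subst i; rewrite hPi.
  case: (i =P p) => [->|np]; first by [] || rewrite ?eqxx ?orbT.
  case: (i =P p.+1) => [e2|n2]; first by subst i; rewrite hPi ?eqxx ?orbT.
  case: (i =P n.-1) => [e3|n3]; first by move: hlast; rewrite -e3 hPi.
  case: (ltnP i p) => h; first by move: (hlow i); rewrite hPi; slia.
  by move: (hfar i); rewrite hPi; slia.
have Pat : forall i, [|| i == 0, (i == 1) && e x (nth x c 1), i == p
          | (i == p.+1) && e x (nth x c p.+1)] -> e x (nth x c i).
  by move=> i; case/or4P => [/eqP->|/andP[/eqP-> h]|/eqP->|/andP[/eqP-> h]].
have hpn : p.+1 < n by slia.
have hb2n : e x (nth x c p.+1) -> p.+2 < n.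
  move=> h; case: (p.+1 =P n.-1) => [e1|]; last slia.
  by move: hlast; rewrite -e1 h.
have segsz : forall k m, m < n -> size (x :: take m (rot k c)) = m.+1.
  by move=> k m hm; rewrite /= size_take size_rot ifT.
case hb1: (e x (nth x c 1)); case hb2: (e x (nth x c p.+1)).
- have hp2 := hb2n hb2.
  case: (p =P 2) => [ep2|np2].
  + exfalso; apply: bf; apply: (@beetle _ _ e_sym e_irr (rot 1 c) x).
    * by apply: hole_rot => //; slia.
    * by rewrite mem_rot.
    move=> i; rewrite size_rot => hi; rewrite nth_rot; try slia.
    have hr := idxr_lt (_ : 1 < n) hi.
    apply/idP/idP => [/(Psub _ (hr _))|H].
      by rewrite hb1 hb2 /idxr; case: ifP => ?; slia.
    by apply: Pat; rewrite hb1 hb2; move: H; rewrite /idxr; case: ifP => ?; slia.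
  + exfalso; apply: (no22 x); apply: (Nij_seg e_sym (a := 0) (b := p)) => //; try slia.
    move=> i hi; apply/idP/idP => [/(Psub i hi)|H].
      by rewrite hb1 hb2; slia.
    by apply: Pat; rewrite hb1 hb2; slia.
- case: (p =P 2) => [ep2|np2].
  + right; right; right; apply: Ni_seg => //; first slia.
    move=> i hi; apply/idP/idP => [/(Psub i hi)|H].
      by rewrite hb1 hb2; slia.
    by apply: Pat; rewrite hb1 hb2; slia.
  + exfalso.
    have Pc : forall i, i < n -> e x (nth x c i) = [|| i == 0, i == 1 | i == p].
      move=> i hi; apply/idP/idP => [/(Psub i hi)|H].
        by rewrite hb1 hb2; slia.
      by apply: Pat; rewrite hb1 hb2; slia.
    have hpn2 : p <= n.-2 by slia.
    have hpn' : p <= n by slia.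
    case: (parB ev hpn') => hod.
    * apply: (@shortc c (x :: take p (rot 1 c))) => //;
        [| by rewrite segsz //; slia | by rewrite segsz; slia].
      apply: segrot => //; try slia.
      - by rewrite Pc; [rewrite /idxr; case: ifP => ?; slia | apply: idxr_lt; slia].
      - by rewrite Pc; [rewrite /idxr; case: ifP => ?; slia | apply: idxr_lt; slia].
      - by move=> i hi; rewrite Pc; [rewrite /idxr; case: ifP => ?; slia | apply: idxr_lt; slia].
    * apply: (@shortc c (x :: take (n - p).+1 (rot p c))) => //;
        [| by rewrite segsz //; slia | by rewrite segsz; slia].
      apply: segrot => //; try slia.
      - by rewrite Pc; [rewrite /idxr; case: ifP => ?; slia | apply: idxr_lt; slia].
      - by rewrite Pc; [rewrite /idxr; case: ifP => ?; slia | apply: idxr_lt; slia].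
      - by move=> i hi; rewrite Pc; [rewrite /idxr; case: ifP => ?; slia | apply: idxr_lt; slia].
- exfalso; have hp2 := hb2n hb2.
  have Pc : forall i, i < n -> e x (nth x c i) = [|| i == 0, i == p | i == p.+1].
    move=> i hi; apply/idP/idP => [/(Psub i hi)|H].
      by rewrite hb1 hb2; slia.
    by apply: Pat; rewrite hb1 hb2; slia.
  have hpn' : p <= n by slia.
  case: (parA ev hpn') => hod.
  * apply: (@shortc c (x :: take p.+1 (rot 0 c))) => //;
      [| by rewrite segsz //; slia | by rewrite segsz; slia].
    apply: segrot => //; try slia.
    - by rewrite Pc; [rewrite /idxr; case: ifP => ?; slia | apply: idxr_lt; slia].
    - by rewrite Pc; [rewrite /idxr; case: ifP => ?; slia | apply: idxr_lt; slia].
    - by move=> i hi; rewrite Pc; [rewrite /idxr; case: ifP => ?; slia | apply: idxr_lt; slia].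
  * apply: (@shortc c (x :: take (n - p) (rot p.+1 c))) => //;
      [| by rewrite segsz //; slia | by rewrite segsz; slia].
    apply: segrot => //; try slia.
    - by rewrite Pc; [rewrite /idxr; case: ifP => ?; slia | apply: idxr_lt; slia].
    - by rewrite Pc; [rewrite /idxr; case: ifP => ?; slia | apply: idxr_lt; slia].
    - by move=> i hi; rewrite Pc; [rewrite /idxr; case: ifP => ?; slia | apply: idxr_lt; slia].
- left; apply: (Nij_seg e_sym (a := 0) (b := p)) => //; try slia.
  move=> i hi; apply/idP/idP => [/(Psub i hi)|H].
    by rewrite hb1 hb2; slia.
  by apply: Pat; rewrite hb1 hb2; slia.
Qed.

End Core.


Section Main.
Variables (T : finType) (e : rel T).
Hypotheses (e_sym : symmetric e) (e_irr : irreflexive e).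

Ltac slia := repeat match goal with
  | H : is_true (e _ _) |- _ => clear H
  | H : is_true (~~ e _ _) |- _ => clear H
  | H : e _ _ = _ |- _ => clear H
  | H : is_true (_ \in _) |- _ => clear H
  | H : is_true (~~ (_ \in _)) |- _ => clear H
  | H : is_true (uniq _) |- _ => clear H
  | H : is_true (~~ odd _) |- _ => clear H
  end; lia.

Lemma short_rot (c : seq T) k : k <= size c -> shortest_even_hole e c ->
  shortest_even_hole e (rot k c).
Proof.
move=> hk [[hc ev] H]; split; first by split; [apply: hole_rot | rewrite size_rot].
by move=> c' hc'; rewrite size_rot; apply: H.
Qed.

Lemma main (c : seq T) :
  beetle_free e -> clean e c -> shortest_even_hole e c ->
  forall x, x \in NG e c ->
    Nij e c 1 1 x \/ Ni e c 1 x \/ Ni e c 2 x \/ Ni e c 3 x.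
Proof.
move=> bf cl sh x xNG.
have [[hc ev] _] := sh.
have [u [n4 _]] := hc.
have xc : x \notin c by move: xNG; rewrite inE => /andP [].
have n5 : size c != 5 by apply/eqP => h; move: ev; rewrite h.
case: (boolP [forall i : 'I_(size c), e x (nth x c i)]) => hall.
  exfalso.
  have Pall : forall i, i < size c -> e x (nth x c i).
    by move=> i hi; apply: (forallP hall (Ordinal hi)).
  case: (size c =P 4) => [h4|h4].
    apply: bf; apply: (beetle e_sym e_irr hc xc) => i hi.
    by rewrite Pall //; apply/esym/idP; slia.
  apply: (cl.1 x); apply: (majorI hc xc (i:=0) (j:=2) (k:=4)); try slia; try apply: Pall; try slia.
  by rewrite /cadj; apply/and3P; split; apply/negP; slia.
move/forallPn: hall => [[j hj] /= hPj].
pose c1 := rot j.+1 c.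
have mc1 : c1 =i c by move=> y; rewrite mem_rot.
have sz1 : size c1 = size c by rewrite size_rot.
have hc1 : hole e c1 by apply: hole_rot => //; slia.
have last1 : ~~ e x (nth x c1 (size c).-1).
  by rewrite nth_rot; try slia; rewrite /idxr ifF; try slia; rewrite (_ : j.+1 + (size c).-1 - size c = j) //; slia.
have hexi : exists i, (i < size c) && e x (nth x c1 i).
  move: xNG; rewrite inE => /andP [_ /existsP [y /andP [hy hxy]]].
  have yc1 : y \in c1 by rewrite mc1; move: hy; rewrite inE.
  exists (index y c1); rewrite -sz1 index_mem yc1 /=.
  by rewrite nth_index.
case: (ex_minnP hexi) => a /andP [ha hPa] hmin.
pose c2 := rot a c1.
have mc2 : c2 =i c by move=> y; rewrite mem_rot mc1.
have hcore := @core _ _ e_sym e_irr c2 x bf (clean_eq (fun y => esym (mc2 y)) cl).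
have ha1 : a <= size c1 by rewrite sz1; slia.
have hj1 : j.+1 <= size c by slia.
have sz2 : size c2 = size c by rewrite size_rot.
have h0 : e x (nth x c2 0).
  by rewrite nth_rot ?sz1; try slia; rewrite /idxr addn0 ifT.
have hl : ~~ e x (nth x c2 (size c2).-1).
  rewrite sz2 nth_rot ?sz1; try slia.
  rewrite /idxr; case: ifP => h.
    have -> : a + (size c).-1 = (size c).-1 by slia.
    exact: last1.
  apply/negP => hP.
  have := hmin (a + (size c).-1 - size c); rewrite hP andbT.
  move=> /(_ (_ : _ < size c)) H; suff : a <= a + (size c).-1 - size c by slia.
  by apply: H; slia.
have mc2' : c2 =i c := mc2.
have xNG2 : x \in NG e c2 by rewrite (NG_eq e mc2').
case: (hcore (short_rot ha1 (short_rot hj1 sh)) xNG2 h0 hl) => [H|[H|[H|H]]].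
- by left; move: H; rewrite (Nij_eq e _ _ _ mc2').
- by right; left; move: H; rewrite (Ni_eq e _ _ mc2').
- by right; right; left; move: H; rewrite (Ni_eq e _ _ mc2').
- by right; right; right; move: H; rewrite (Ni_eq e _ _ mc2').
Qed.

End Main.

Theorem lemma3 (T : finType) (e : rel T) (e_sym : symmetric e)
    (e_irr : irreflexive e) (c : seq T) :
  beetle_free e -> clean e c -> shortest_even_hole e c ->
  forall x, x \in NG e c ->
    Nij e c 1 1 x \/ Ni e c 1 x \/ Ni e c 2 x \/ Ni e c 3 x.
Proof. exact: (main e_sym e_irr). Qed.
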